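(* If $G$ is a graph with minimum degree $\delta=\delta(G)\ge 2$ and maximum degree $\Delta=\Delta(G)\ge 4\lfloor\delta/2\rfloor-2$, then $$\mathrm{TC}_2(G)\le \Big\lfloor\tfrac{\delta}{2}\Big\rfloor\Big(\Delta-2\Big\lfloor\tfrac{\delta}{2}\Big\rfloor+1\Big)+\Big\lceil\tfrac{\delta}{2}\Big\rceil.$$ Moreover, the bound is sharp for every even minimum degree: for every even $\delta\ge 2$ there exists a graph with minimum degree $\delta$ satisfying the hypothesis and attaining equality.
   Context: All graphs are finite, simple and connected. $N(v)$ denotes the open neighborhood of $v$. A set $S\subseteq V(G)$ is a total $2$-dominating set if $|N(v)\cap S|\ge 2$ for every $v\in V(G)$. Two disjoint sets $U,W\subseteq V(G)$ form a total $2$-coalition if neither is a total $2$-dominating set but $U\cup W$ is. A total $2$-coalition partition of $G$ is a partition $\Omega$ of $V(G)$ in which every set forms a total $2$-coalition with some other set of $\Omega$; $\mathrm{TC}_2(G)$ is the maximum cardinality of such a partition. *)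

(* Defs.v *)
From mathcomp Require Import all_boot.
Set Implicit Arguments. Unset Strict Implicit. Unset Printing Implicit Defensive.

Definition simple_graph (T : finType) (e : rel T) : Prop :=
  symmetric e /\ irreflexive e.

Definition connected_graph (T : finType) (e : rel T) : Prop :=
  forall x y : T, connect e x y.

Definition nbhd (T : finType) (e : rel T) (v : T) : {set T} := [set u | e v u].
Definition deg (T : finType) (e : rel T) (v : T) : nat := #|nbhd e v|.

Definition is_min_degree (T : finType) (e : rel T) (d : nat) : Prop :=
  (exists v, deg e v = d) /\ (forall v, d <= deg e v).
Definition is_max_degree (T : finType) (e : rel T) (d : nat) : Prop :=
  (exists v, deg e v = d) /\ (forall v, deg e v <= d).

Definition total2dom (T : finType) (e : rel T) (S : {set T}) : bool :=
  [forall v, 2 <= #|nbhd e v :&: S|].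

Definition total2coalition (T : finType) (e : rel T) (U W : {set T}) : bool :=
  [&& [disjoint U & W], ~~ total2dom e U, ~~ total2dom e W & total2dom e (U :|: W)].

Definition tc2_partition (T : finType) (e : rel T) (P : {set {set T}}) : bool :=
  partition P [set: T] &&
  [forall U in P, exists W in P, total2coalition e U W].

Definition TC2 (T : finType) (e : rel T) : nat :=
  \max_(P : {set {set T}} | tc2_partition e P) #|P|.

(* Main.v *)
Require Import Defs.
From mathcomp Require Import all_boot zify.
Set Implicit Arguments. Unset Strict Implicit. Unset Printing Implicit Defensive.


Lemma card_sumI (T : finType) (X S : {set T}) :
  #|X :&: S| = \sum_(x in S) (x \in X).
Proof.
rewrite -sum1_card big_mkcond /= [RHS]big_mkcond /=.
apply: eq_bigr => x _; rewrite inE; by case: (x \in X); case: (x \in S).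
Qed.

Lemma psum (T : finType) (P : {set {set T}}) (S : {set T}) :
  partition P [set: T] -> \sum_(X in P) #|X :&: S| = #|S|.
Proof.
move=> /and3P [/eqP cov triv _].
under eq_bigr => X _ do rewrite card_sumI.
rewrite exchange_big /= -sum1_card.
apply: eq_bigr => x _.
have xc : x \in cover P by rewrite cov inE.
rewrite (bigD1 (pblock P x)) ?pblock_mem //= mem_pblock xc big1 // => X /andP [XP ne].
case xX: (x \in X) => //; move: ne; by rewrite (def_pblock triv XP xX) eqxx.
Qed.

Lemma card_sep (T : finType) (P : {set T}) (p : pred T) :
  #|[set X in P | p X]| = \sum_(X in P) (p X : nat).
Proof.
rewrite -sum1_card big_mkcond /= [RHS]big_mkcond /=.
apply: eq_bigr => x _; rewrite inE; by case: (x \in P); case: (p x).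
Qed.

Lemma coal2 (T : finType) (e : rel T) (U W : {set T}) (u : T) :
  total2coalition e U W -> 2 <= #|U :&: nbhd e u| + #|W :&: nbhd e u|.
Proof.
case/and4P => _ _ _ /forallP /(_ u) h.
apply: leq_trans h _; rewrite setIUr (setIC U) (setIC W).
by rewrite leq_card_setU.
Qed.

Lemma not2dom (T : finType) (e : rel T) (W : {set T}) :
  ~~ total2dom e W -> exists u, #|W :&: nbhd e u| <= 1.
Proof.
by move/forallPn => [u]; rewrite -ltnNge ltnS setIC => h; exists u.
Qed.

Lemma sub_sum (T : finType) (P A : {set {set T}}) (f : {set T} -> nat) :
  A \subset P -> \sum_(X in A) f X <= \sum_(X in P) f X.
Proof.
move=> AP; rewrite [X in _ <= X](big_setID A) /= (setIidPr AP); exact: leq_addr.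
Qed.


Lemma arith_key (h k D : nat) : h <= k -> 4 * k - 2 <= D -> 1 <= k -> h * D + 2 * k * k <= k * D + 2 * h * h.
Proof.
move=> hk kD k1.
have [d kd] : exists d, k = h + d by exists (k - h); lia.
subst k.
case: d hk kD k1 => [|d] hk kD k1; first lia.
have [E DE] : exists E, D = E + (4*h + 2*d.+1) by exists (D - (4*h + 2*d.+1)); lia.
subst D. nia.
Qed.
Lemma fin (P H B h delta D k r : nat) :
  P + H <= delta + B -> 2 * H <= delta -> h <= H -> 2*h*h + (B - h) <= h * D -> h <= B ->
  4 * k - 2 <= D -> delta = r + k.*2 -> r <= 1 -> 1 <= k ->
  P <= k * (D - 2 * k + 1) + (r + k).
Proof.
move=> h1 h2 h3 h4 h5 h6 h7 h8 h9.
have hk : h <= k by lia.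
have := @arith_key h k D hk h6 h9.
have [D' DD] : exists D', D = D' + 2 * k by exists (D - 2 * k); lia.
subst D. nia.
Qed.

Lemma partbound (T : finType) (e : rel T) (delta Delta : nat) (P : {set {set T}}) :
  is_min_degree e delta -> is_max_degree e Delta -> tc2_partition e P ->
  exists H B h : nat,
   [/\ #|P| + H <= delta + B, 2 * H <= delta, h <= H, 2*h*h + (B - h) <= h * Delta & h <= B].
Proof.
move=> [[v dv] _] [_ maxD] /andP [part coal].
set Nv := nbhd e v.
pose c X := #|X :&: Nv|.
have sumc : \sum_(X in P) c X = delta by rewrite /c psum // -dv.
pose H := [set X in P | 2 <= c X].
pose B := [set X in P | c X == 0].
pose j Y := odflt set0 [pick W in P | total2coalition e Y W].
have jP : forall Y, Y \in P -> j Y \in P /\ total2coalition e Y (j Y).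
  move=> Y YP; move/forall_inP: coal => /(_ Y YP) /exists_inP [W WP cW].
  rewrite /j; case: pickP => [W' /andP[] //|/(_ W)]; by rewrite WP cW.
pose u W := odflt v [pick x | #|W :&: nbhd e x| <= 1].
have uP : forall W, ~~ total2dom e W -> #|W :&: nbhd e (u W)| <= 1.
  move=> W /not2dom [x hx]; rewrite /u; case: pickP => [y //|/(_ x)]; by rewrite hx.
pose H' := j @: B.
pose rep Z := odflt set0 [pick Y in B | j Y == Z].
have BP : B \subset P by apply/subsetP => X; rewrite inE => /andP[].
have HP : H' \subset P.
  apply/subsetP => Z /imsetP [Y YB ->]; exact: (jP Y (subsetP BP Y YB)).1.
have jc : forall Y, Y \in B -> 2 <= c (j Y).
  move=> Y YB; have YP := subsetP BP Y YB; have [_ cY] := jP Y YP.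
  have := coal2 v cY; move: YB; rewrite inE => /andP [_ /eqP]; rewrite /c => ->.
  by [].
have HH : H' \subset H.
  apply/subsetP => Z /imsetP [Y YB ->]; rewrite inE jc // andbT.
  exact: (jP Y (subsetP BP Y YB)).1.
have HB : [disjoint H' & B].
  apply/pred0P => Z /=; apply/negbTE/negP => /andP [/imsetP [Y YB ->]].
  by rewrite inE => /andP [_ /eqP h]; have := jc Y YB; rewrite h.
have repP : forall Z, Z \in H' -> rep Z \in B /\ j (rep Z) = Z.
  move=> Z /imsetP [Y YB ->]; rewrite /rep; case: pickP => [Y' /andP [Y'B /eqP] //|/(_ Y)].
  by rewrite YB eqxx.
have uH : forall W, W \in H' -> #|W :&: nbhd e (u W)| <= 1.
  move=> W /imsetP [Y YB ->]; apply: uP.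
  by have [_ /and4P [_ _ ]] := jP Y (subsetP BP Y YB).
pose R := rep @: H'.
have RB : R \subset B by apply/subsetP => Y /imsetP [Z ZH ->]; exact: (repP Z ZH).1.
have repinj : {in H' &, injective rep}.
  by move=> Z1 Z2 h1 h2 e12; rewrite -(repP Z1 h1).2 -(repP Z2 h2).2 e12.
have cardR : #|R| = #|H'| by rewrite card_in_imset.
pose w W Y := #|Y :&: nbhd e (u W)|.
have upW : forall W, \sum_(Z in H') w W Z + \sum_(Y in B) w W Y <= Delta.
  move=> W; rewrite -bigU //= (eq_bigl [in H' :|: B]); last by move=> X; rewrite !inE.
  have sub : H' :|: B \subset P by rewrite subUset HP BP.
  apply: leq_trans (sub_sum _ sub) _.
  by rewrite /w psum //; apply: maxD.
have pair2 : forall (W Z : {set T}), Z \in H' -> 2 <= w W Z + w W (rep Z).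
  move=> W Z ZH; have [rB jr] := repP Z ZH.
  have [_ cY] := jP _ (subsetP BP _ rB); rewrite jr in cY.
  by rewrite addnC; apply: coal2.
have one : forall Y, Y \in B -> 1 <= \sum_(W in H') w W Y.
  move=> Y YB; have jH : j Y \in H' by apply: imset_f.
  rewrite (bigD1 (j Y)) //=; apply: leq_trans (leq_addr _ _).
  have [_ cY] := jP _ (subsetP BP _ YB).
  have := coal2 (u (j Y)) cY; have := uH _ jH; rewrite /w; lia.
have low : forall W, 2 * #|H'| + \sum_(Y in B :\: R) w W Y <=
                      \sum_(Z in H') w W Z + \sum_(Y in B) w W Y.
  move=> W; rewrite [\sum_(Y in B) _](big_setID R) /= (setIidPr RB) [\sum_(Y in R) _]big_imset //= addnA leq_add2r.
  rewrite -big_split /= mulnC -sum_nat_const; apply: leq_sum => Z ZH; exact: pair2.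
exists #|H|, #|B|, #|H'|; split.
- rewrite -sum1_card !card_sep -sumc -big_split /= -big_split /=; apply: leq_sum => X _.
  by case: (c X) => [|[|n]].
- rewrite card_sep -sumc big_distrr /=; apply: leq_sum => X _.
  by case: (c X) => [|[|n]].
- by apply: subset_leq_card.
- have s1 : \sum_(W in H') (2 * #|H'| + \sum_(Y in B :\: R) w W Y) <= #|H'| * Delta.
    rewrite -sum_nat_const; apply: leq_sum => W _; exact: leq_trans (low W) (upW W).
  apply: leq_trans s1; rewrite big_split /= sum_nat_const exchange_big /=.
  have -> : #|B| - #|H'| = #|B :\: R| by rewrite cardsD (setIidPr RB) cardR.
  rewrite mulnC leq_add2l -sum1_card; apply: leq_sum => Y.
  rewrite inE => /andP [_ YB]; exact: one.
- by rewrite -cardR; apply: subset_leq_card.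
Qed.

Lemma part1 (T : finType) (e : rel T) (delta Delta : nat) :
  is_min_degree e delta -> is_max_degree e Delta ->
  2 <= delta -> 4 * delta./2 - 2 <= Delta ->
  TC2 e <= delta./2 * (Delta - 2 * delta./2 + 1) + uphalf delta.
Proof.
move=> mi ma d2 hD; apply/bigmax_leqP => P hP.
have [H [B [h [a1 a2 a3 a4 a5]]]] := partbound mi ma hP.
have dd := odd_double_half delta.
rewrite uphalf_half.
apply: (fin a1 a2 a3 a4 a5 hD); first by rewrite dd.
- by case: (odd delta).
- move: d2; rewrite -dd; case: (odd delta) => /=; lia.
Qed.


Definition V (k m : nat) : finType := ('I_k * 'I_m + ('I_k * 'I_k * bool + 'I_k * 'I_3))%type.

Definition fadj k (j : 'I_k) (l : 'I_k) (p : 'I_3) : bool :=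
  (val p == 0) || ((val p == 1) && (l != j)).

Definition adj k m (x y : V k m) : bool :=
  match x, y with
  | inl (j, _), inr (inl (_, j', _)) => j' == j
  | inr (inl (_, j', _)), inl (j, _) => j' == j
  | inr (inl (_, j, _)), inr (inr (l, p)) => fadj j l p
  | inr (inr (l, p)), inr (inl (_, j, _)) => fadj j l p
  | inr (inr a), inr (inr b) => a != b
  | _, _ => false
  end.

Lemma adj_sym k m : symmetric (@adj k m).
Proof.
move=> [[j t]|[[[i j] s]|[l p]]] [[j' t']|[[[i' j''] s']|[l' p']]] //=.
by rewrite eq_sym.
Qed.

Lemma adj_irr k m : irreflexive (@adj k m).
Proof. by move=> [[j t]|[[[i j] s]|[l p]]] //=; rewrite eqxx. Qed.


Definition K (k m : nat) : finType := ('I_k + 'I_k * 'I_m)%type.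

Definition key k m (x : V k m) : K k m :=
  match x with
  | inl q => inr q
  | inr (inl (i, _, _)) => inl i
  | inr (inr (l, _)) => inl l
  end.

Definition blk k m (q : K k m) : {set V k m} := [set x | key x == q].

Definition Pt k m : {set {set V k m}} := [set blk q | q : K k m].

Definition kinv k m (q : K k m) : V k m :=
  match q with
  | inl i => inr (inr (i, ord0))
  | inr q => inl q
  end.

Lemma keyK k m (q : K k m) : key (kinv q) = q.
Proof. by case: q => [i|[j t]]. Qed.

Lemma blk_inj k m : injective (@blk k m).
Proof.
move=> q1 q2 e; have : kinv q1 \in blk q2 by rewrite -e inE keyK.
by rewrite inE keyK => /eqP.
Qed.

Lemma Pt_part k m : partition (@Pt k m) [set: V k m].
Proof.
apply/and3P; split.
- apply/eqP/setP => x; rewrite inE; apply/bigcupP; exists (blk (key x)).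
    exact: imset_f.
  by rewrite inE.
- apply/trivIsetP => A B /imsetP [q1 _ ->] /imsetP [q2 _ ->] ne.
  apply/pred0P => x /=; rewrite !inE; apply/negP => /andP [/eqP h1 /eqP h2].
  by move: ne; rewrite -h1 -h2 eqxx.
- apply/imsetP => [[q _ e]]; have : kinv q \in blk q by rewrite inE keyK.
  by rewrite -e inE.
Qed.

Lemma card_Pt k m : #|@Pt k m| = k + k * m.
Proof. by rewrite card_imset ?cardsT ?card_sum ?card_prod ?card_ord //; exact: blk_inj. Qed.


Lemma ordS3 (p : 'I_3) : [&& ordS p != p, ordS (ordS p) != p & ordS p != ordS (ordS p)].
Proof. by case: p => [[|[|[|n]]] hp]. Qed.

Lemma two_le (T : finType) (S : {set T}) a b : a != b -> a \in S -> b \in S -> 2 <= #|S|.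
Proof.
move=> ab aS bS.
have -> : 2 = #|[set a; b]| by rewrite cards2 ab.
by apply: subset_leq_card; apply/subsetP => x; rewrite !inE => /orP [] /eqP ->.
Qed.

Lemma t2d_WY k m (i : 'I_k) (t : 'I_m) :
  total2dom (@adj k m) (blk (inl i) :|: blk (inr (i, t))).
Proof.
apply/forallP => x; rewrite /nbhd.
case: x => [[j t']|[[[i' j] s]|[l p]]].
- apply: (@two_le (V k m) _ (inr (inl (i, j, false))) (inr (inl (i, j, true)))).
  + by apply/eqP => -[].
  + by rewrite !inE /= !eqxx.
  + by rewrite !inE /= !eqxx.
- case: (eqVneq j i) => [->|ne].
  + apply: (@two_le (V k m) _ (inl (i, t)) (inr (inr (i, (ord0 : 'I_3))))).
    * by [].
    * by rewrite !inE /= !eqxx.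
    * by rewrite !inE /= !eqxx.
  + have o1 : (1 < 3) by [].
    apply: (@two_le (V k m) _ (inr (inr (i, (ord0 : 'I_3)))) (inr (inr (i, Ordinal o1)))).
    * by apply/eqP => -[].
    * by rewrite !inE /= !eqxx.
    * by rewrite !inE /= !eqxx /fadj /= eq_sym ne.
- have /and3P [h1 h2 h3] := ordS3 p.
  apply: (@two_le (V k m) _ (inr (inr (i, ordS p))) (inr (inr (i, ordS (ordS p))))).
  + apply/eqP => h; move/eqP: h3; apply; exact: (congr1 (fun z : V k m => match z with inr (inr (_, q)) => q | _ => p end) h).
  + by rewrite !inE /= !eqxx /= andbT xpair_eqE negb_and (eq_sym p) h1 orbT.
  + by rewrite !inE /= !eqxx /= andbT xpair_eqE negb_and (eq_sym p) h2 orbT.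
Qed.

Lemma le1_sub (T : finType) (S : {set T}) a : S \subset [set a] -> #|S| <= 1.
Proof. by move/subset_leq_card; rewrite cards1. Qed.

Lemma ntd_W k m (i : 'I_k) : ~~ total2dom (@adj k m) (blk (inl i)).
Proof.
apply/forallPn; exists (inr (inl (i, i, false))); rewrite -ltnNge ltnS.
apply: (@le1_sub _ _ (inr (inr (i, (ord0 : 'I_3))))).
apply/subsetP => z; rewrite !inE.
case: z => [[j t]|[[[i' j] s]|[l p]]] /andP [h1 /eqP h2] //=.
case: h2 => el; subst l; move: h1; rewrite /= /fadj eqxx andbF orbF => h.
by apply/eqP; congr (inr (inr (_, _))); apply/val_inj; apply/eqP.
Qed.

Lemma ntd_Y k m (q : 'I_k * 'I_m) : ~~ total2dom (@adj k m) (blk (inr q)).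
Proof.
apply/forallPn; exists (inl q); rewrite -ltnNge ltnS.
apply: (@le1_sub _ _ (inl q)).
apply/subsetP => z; rewrite !inE.
by case: z => [[j t]|[[[i' j] s]|[l p]]] /andP [_ /eqP h]; case: h => //= <-.
Qed.

Lemma coal_WY k m (i : 'I_k) (t : 'I_m) :
  total2coalition (@adj k m) (blk (inl i)) (blk (inr (i, t))).
Proof.
apply/and4P; split; [|exact: ntd_W|exact: ntd_Y|exact: t2d_WY].
apply/pred0P => z /=; rewrite !inE; apply/negP => /andP [/eqP h1 /eqP h2].
by rewrite h1 in h2.
Qed.

Lemma coal_sym (T : finType) (e : rel T) U W :
  total2coalition e U W -> total2coalition e W U.
Proof.
by case/and4P => d a b c; apply/and4P; split; rewrite 1?disjoint_sym 1?setUC.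
Qed.

Lemma Pt_tc2 k m : 0 < m -> tc2_partition (@adj k m) (@Pt k m).
Proof.
move=> m0; apply/andP; split; first exact: Pt_part.
apply/forall_inP => U /imsetP [[i|[j t]] _ ->]; apply/exists_inP.
- exists (blk (inr (i, Ordinal m0))); first exact: imset_f.
  exact: coal_WY.
- exists (blk (inl j)); first exact: imset_f.
  exact/coal_sym/coal_WY.
Qed.


Lemma deg_y k m (j : 'I_k) (t : 'I_m) : deg (@adj k m) (inl (j, t)) = k * 2.
Proof.
pose f := fun p : 'I_k * bool => (inr (inl (p.1, j, p.2)) : V k m).
have finj : injective f by move=> [i s] [i' s'] [-> ->].
rewrite /deg.
have -> : nbhd (@adj k m) (inl (j, t)) = f @: setT.
  apply/setP => z; rewrite inE; apply/idP/imsetP.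
  - case: z => [[j' t']|[[[i j'] s]|[l p]]] //= /eqP ->.
    by exists (i, s).
  - by move=> [[i s] _ ->] /=.
by rewrite card_imset // cardsT card_prod card_ord card_bool.
Qed.

Lemma deg_X_ge k m (i j : 'I_k) (s : bool) : m <= deg (@adj k m) (inr (inl (i, j, s))).
Proof.
pose f := fun t : 'I_m => (inl (j, t) : V k m).
have finj : injective f by move=> t t' [->].
have cm : #|f @: setT| = m by rewrite card_imset // cardsT card_ord.
apply: (@leq_trans #|f @: setT|); first by rewrite cm.
rewrite /deg; apply: subset_leq_card; apply/subsetP => z /imsetP [t _ ->]; by rewrite inE /= eqxx.
Qed.

Lemma leU (T : finType) (A B : {set T}) : #|A :|: B| <= #|A| + #|B|.
Proof. by rewrite cardsU leq_subr. Qed.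

Lemma deg_X_le k m (i j : 'I_k) (s : bool) :
  deg (@adj k m) (inr (inl (i, j, s))) <= m + (k + (k.-1)).
Proof.
have o1 : 1 < 3 by [].
pose A := [set (inl (j, t) : V k m) | t : 'I_m].
pose B1 := [set (inr (inr (l, (ord0 : 'I_3))) : V k m) | l : 'I_k].
pose B2 := [set (inr (inr (l, Ordinal o1)) : V k m) | l in [set~ j]].
have sub : nbhd (@adj k m) (inr (inl (i, j, s))) \subset A :|: (B1 :|: B2).
  apply/subsetP => z; rewrite inE.
  case: z => [[j' t']|[[[i' j'] s']|[l p]]] //=.
  - by move/eqP => <-; rewrite !inE; apply/orP; left; apply: imset_f.
  - rewrite /fadj => /orP [h|/andP [h1 h2]].
      rewrite !inE; apply/orP; right; apply/orP; left; apply/imsetP; exists l => //.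
      by congr (inr (inr (_, _))); apply/val_inj; apply/eqP.
    rewrite !inE; apply/orP; right; apply/orP; right; apply/imsetP; exists l.
      by rewrite !inE.
    by congr (inr (inr (_, _))); apply/val_inj; apply/eqP.
rewrite /deg; apply: leq_trans (subset_leq_card sub) _.
apply: leq_trans (leU _ _) _; apply: leq_add.
  by apply: leq_trans (leq_imset_card _ _) _; rewrite ?cardsT card_ord.
apply: leq_trans (leU _ _) _; apply: leq_add.
  by apply: leq_trans (leq_imset_card _ _) _; rewrite ?cardsT card_ord.
by apply: leq_trans (leq_imset_card _ _) _; rewrite cardsC1 card_ord.
Qed.

Lemma deg_F_ge k m (a : 'I_k * 'I_3) : (k * 3).-1 <= deg (@adj k m) (inr (inr a)).
Proof.
pose f := fun b : 'I_k * 'I_3 => (inr (inr b) : V k m).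
have finj : injective f by move=> b b' [->].
have cm : #|f @: [set~ a]| = (k * 3).-1 by rewrite card_imset // cardsC1 card_prod !card_ord.
apply: (@leq_trans #|f @: [set~ a]|); first by rewrite cm.
rewrite /deg; apply: subset_leq_card; apply/subsetP => z /imsetP [b hb ->].
by move: hb; clear cm; case: a => l p; rewrite !inE /= eq_sym.
Qed.

Lemma deg_F_le k m (a : 'I_k * 'I_3) : deg (@adj k m) (inr (inr a)) <= k * k * 2 + k * 3.
Proof.
case: a => l p.
pose f := fun w : ('I_k * 'I_k * bool + 'I_k * 'I_3)%type => (inr w : V k m).
have sub : nbhd (@adj k m) (inr (inr (l, p))) \subset f @: setT.
  apply/subsetP => z; rewrite inE; case: z => [[j t]|w] //= _.
  by apply/imsetP; exists w.
rewrite /deg; apply: leq_trans (subset_leq_card sub) _.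
apply: leq_trans (leq_imset_card _ _) _.
by rewrite cardsT card_sum !card_prod !card_ord card_bool.
Qed.


Lemma conn k' m : connected_graph (@adj k'.+1 m).
Proof.
pose z0 : V k'.+1 m := inr (inr (ord0, ord0)).
have csym : connect_sym (@adj k'.+1 m) by apply: sym_connect_sym; exact: adj_sym.
have toz : forall x, connect (@adj k'.+1 m) x z0.
  case=> [[j t]|[[[i j] s]|[l p]]].
  - have h1 : @adj k'.+1 m (inl (j, t)) (inr (inl (ord0, j, false))) by rewrite /= eqxx.
    by apply: connect_trans (connect1 h1) (connect1 _).
  - by apply: connect1.
  - case: (eqVneq (l, p) (ord0, ord0)) => [e|ne].
      by rewrite /z0 -e connect0.
    by apply: connect1.
move=> x y; apply: connect_trans (toz x) _; by rewrite csym.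
Qed.

Lemma construct (k' : nat) :
  exists (T : finType) (e : rel T) (Delta : nat),
    simple_graph e /\ connected_graph e /\
    is_min_degree e (k'.+1).*2 /\ is_max_degree e Delta /\
    4 * k'.+1 - 2 <= Delta /\
    TC2 e = k'.+1 * (Delta - 2 * k'.+1 + 1) + k'.+1.
Proof.
set k := k'.+1.
pose m := k * k * 2 + k * 3.
have m0 : 0 < m by rewrite /m /k; lia.
pose e := @adj k m.
pose Delta := \max_(x : V k m) deg e x.
have degup : forall x, deg e x <= m + (k + k.-1).
  case=> [[j t]|[[[i j] s]|[l p]]].
  - rewrite deg_y /m /k; lia.
  - exact: deg_X_le.
  - apply: leq_trans (deg_F_le _ _) _; rewrite /m; lia.
have deglo : forall x, k.*2 <= deg e x.
  case=> [[j t]|[[[i j] s]|[l p]]].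
  - rewrite deg_y; lia.
  - apply: leq_trans (deg_X_ge _ _ _ _); rewrite /m /k; lia.
  - apply: leq_trans (deg_F_ge _ _); rewrite /k; lia.
have x0 : V k m := inl (ord0, Ordinal m0).
have DX : m <= Delta.
  apply: leq_trans (deg_X_ge m (ord0 : 'I_k) ord0 false) _; exact: leq_bigmax.
have Dup : Delta <= m + (k + k.-1) by apply/bigmax_leqP => x _; exact: degup.
have mi : is_min_degree e k.*2.
  split; last exact: deglo.
  by exists (inl (ord0, Ordinal m0)); rewrite deg_y; lia.
have ma : is_max_degree e Delta.
  split; last by move=> v; exact: leq_bigmax.
  have [x hx] := @eq_bigmax (V k m) (deg e) (ltac:(apply/card_gt0P; by exists (inl (ord0, Ordinal m0)))).
  by exists x.
exists (V k m), e, Delta; split; [|split; [exact: conn|split; [exact: mi|split; [exact: ma|split]]]].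
- split; [exact: adj_sym|exact: adj_irr].
- apply: leq_trans DX; rewrite /m /k; lia.
- have up := part1 mi ma.
  rewrite doubleK uphalf_double in up.
  have up' := up (ltac:(rewrite /k; lia)) (ltac:(apply: leq_trans DX; rewrite /m /k; lia)).
  have lo : k + k * m <= TC2 e.
    rewrite -card_Pt; apply: (leq_bigmax_cond (@Pt k m)); exact: Pt_tc2.
  apply/eqP; rewrite eqn_leq up' /=; apply: leq_trans lo.
  have : Delta - 2 * k + 1 <= m by rewrite /k in Dup *; lia.
  move=> h; rewrite addnC leq_add2l; exact: leq_mul.
Qed.


Theorem theorem3p9 :
  (forall (T : finType) (e : rel T) (delta Delta : nat),
      simple_graph e -> connected_graph e ->
      is_min_degree e delta -> is_max_degree e Delta ->
      2 <= delta -> 4 * delta./2 - 2 <= Delta ->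
      TC2 e <= delta./2 * (Delta - 2 * delta./2 + 1) + uphalf delta)
  /\
  (forall delta : nat, 2 <= delta -> ~~ odd delta ->
     exists (T : finType) (e : rel T) (Delta : nat),
       simple_graph e /\ connected_graph e /\
       is_min_degree e delta /\ is_max_degree e Delta /\
       4 * delta./2 - 2 <= Delta /\
       TC2 e = delta./2 * (Delta - 2 * delta./2 + 1) + uphalf delta).
Proof.
split.
- move=> T e delta Delta _ _ mi ma d2 hD; exact: part1.
- move=> delta d2 ev.
  have dd : delta = (delta./2).*2 by rewrite -[LHS]odd_double_half (negbTE ev).
  move: d2; rewrite dd; case: (delta./2) => [|k'] // _.
  rewrite doubleK uphalf_double; exact: construct.
Qed.
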